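(* Let $A$ be an $n\times n$ Bott matrix. Then the seal space $Q^n_{\mathcal{F}_A}$ is homeomorphic to $M(A)=\mathbb{R}^n/\Gamma(A)$.
   Context: $\mathcal{C}^n=\{x\in\mathbb{R}^n: -\tfrac14\le x_i\le\tfrac14\}$; for $j\in\{\pm1,\dots,\pm n\}$, $\mathbf{F}(i)$, $\mathbf{F}(-i)$ ($1\le i\le n$) are the facets in $\{x_i=\tfrac14\}$, $\{x_i=-\tfrac14\}$. A binary matrix has entries in $\mathbb{Z}_2$; $A^i_k$ denotes the $(i,k)$ entry viewed as $0$ or $1$. A Bott matrix is a binary square matrix conjugate by a permutation matrix to a strictly upper triangular binary matrix (in particular it has zero diagonal). For a binary $n\times n$ matrix $A$ with zero diagonal: $\mathcal{F}_A$ is the facets-pairing structure pairing $\mathbf{F}(j)$ with $\mathbf{F}(-j)$ via $\tau^A_j:\mathbf{F}(j)\to\mathbf{F}(-j)$, $\tau^A_j(x)=y$ with $y_{|j|}=-x_{|j|}$ and $y_k=(-1)^{A^{|j|}_k}x_k$ for $k\ne|j|$. The seal space $Q^n_{\mathcal{F}_A}$ is the quotient of $\mathcal{C}^n$ by the equivalence relation generated by $x\sim\tau^A_j(x)$ ($x\in\mathbf{F}(j)$). $\Gamma(A)$ is the subgroup of $\mathrm{Isom}(\mathbb{R}^n)$ generated by $s_1,\dots,s_n$, where $s_i(x)=y$ with $y_i=x_i+\tfrac12$ and $y_k=(-1)^{A^i_k}x_k$ for $k\ne i$. *)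

(* Defs.v *)
From mathcomp Require Import all_boot all_fingroup.
From Stdlib Require Import Reals Relations.

Set Implicit Arguments.
Unset Strict Implicit.

(* A quotient of a type X (with a topology given by openX) by a relation E:
   points are equivalence classes, i.e. predicates of the form [x]_E. *)
Definition quot (X : Type) (E : X -> X -> Prop) : Type :=
  { S : X -> Prop | exists x : X, forall y, S y <-> E x y }.

Definition cls (X : Type) (E : X -> X -> Prop) (x : X) : quot E :=
  exist (fun S => exists x0 : X, forall y, S y <-> E x0 y) (E x)
        (ex_intro _ x (fun y => iff_refl (E x y))).

Definition quot_open (X : Type) (openX : (X -> Prop) -> Prop)
  (E : X -> X -> Prop) (W : quot E -> Prop) : Prop :=
  openX (fun x => W (cls E x)).
Arguments quot_open {X} openX E W.

Definition continuous_map (X Y : Type) (openX : (X -> Prop) -> Prop)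
  (openY : (Y -> Prop) -> Prop) (f : X -> Y) : Prop :=
  forall V : Y -> Prop, openY V -> openX (fun x => V (f x)).

Definition homeomorphic (X Y : Type) (openX : (X -> Prop) -> Prop)
  (openY : (Y -> Prop) -> Prop) : Prop :=
  exists (f : X -> Y) (g : Y -> X),
    (forall x, g (f x) = x) /\ (forall y, f (g y) = y) /\
    continuous_map openX openY f /\ continuous_map openY openX g.

Definition Rn (n : nat) : Type := 'I_n -> R.

(* Euclidean topology (the sup-norm balls generate the same topology). *)
Definition Rn_open (n : nat) (U : Rn n -> Prop) : Prop :=
  forall x, U x -> exists eps : R, (0 < eps)%R /\
    forall y : Rn n, (forall i, (Rabs (y i - x i) < eps)%R) -> U y.

Definition in_cube (n : nat) (x : Rn n) : Prop :=
  forall i, (-(1/4) <= x i <= 1/4)%R.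

Definition cube (n : nat) : Type := { x : Rn n | in_cube x }.

Definition cube_open (n : nat) (V : cube n -> Prop) : Prop :=
  exists U : Rn n -> Prop, Rn_open U /\ forall c : cube n, V c <-> U (proj1_sig c).

Definition bmatrix (n : nat) : Type := 'I_n -> 'I_n -> bool.

(* Conjugate by a permutation matrix to a strictly upper triangular matrix:
   there is a relabelling s of the indices such that the entry (s^-1 a, s^-1 b)
   is nonzero only if a < b, i.e. A i j = 1 implies s i < s j. *)
Definition is_Bott (n : nat) (A : bmatrix n) : Prop :=
  exists s : 'S_n, forall i j : 'I_n, A i j -> (s i < s j)%N.

Definition sgnb (b : bool) (x : R) : R := if b then (- x)%R else x.

(* tau^A_j for |j| = i (same formula for j = i and j = -i). *)
Definition tauA (n : nat) (A : bmatrix n) (i : 'I_n) (x : Rn n) : Rn n :=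
  fun k => if k == i then (- x k)%R else sgnb (A i k) (x k).

(* x ~ tau_j(x) for x in the facet F(j) (j = i: x_i = 1/4; j = -i: x_i = -1/4). *)
Definition seal_gen (n : nat) (A : bmatrix n) (c d : cube n) : Prop :=
  exists i : 'I_n,
    (proj1_sig c i = 1/4 \/ proj1_sig c i = -(1/4))%R /\
    proj1_sig d = tauA A i (proj1_sig c).

Definition seal_rel (n : nat) (A : bmatrix n) : relation (cube n) :=
  clos_refl_sym_trans (cube n) (seal_gen A).

Definition seal_space (n : nat) (A : bmatrix n) : Type := quot (seal_rel A).

Definition seal_open (n : nat) (A : bmatrix n) : (seal_space A -> Prop) -> Prop :=
  quot_open (@cube_open n) (seal_rel A).

Definition sA (n : nat) (A : bmatrix n) (i : 'I_n) (x : Rn n) : Rn n :=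
  fun k => if k == i then (x k + 1/2)%R else sgnb (A i k) (x k).

Definition sA_inv (n : nat) (A : bmatrix n) (i : 'I_n) (x : Rn n) : Rn n :=
  fun k => if k == i then (x k - 1/2)%R else sgnb (A i k) (x k).

Inductive GammaA (n : nat) (A : bmatrix n) : (Rn n -> Rn n) -> Prop :=
  | Gamma_id : GammaA A (fun x => x)
  | Gamma_s : forall g i, GammaA A g -> GammaA A (fun x => sA A i (g x))
  | Gamma_sinv : forall g i, GammaA A g -> GammaA A (fun x => sA_inv A i (g x)).

Definition orbit_rel (n : nat) (A : bmatrix n) (x y : Rn n) : Prop :=
  exists g, GammaA A g /\ y = g x.

Definition MA (n : nat) (A : bmatrix n) : Type := quot (orbit_rel A).

Definition MA_open (n : nat) (A : bmatrix n) : (MA A -> Prop) -> Prop :=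
  quot_open (@Rn_open n) (orbit_rel A).

(* Main.v *)
Require Import Defs.
From mathcomp Require Import all_boot all_fingroup.
From Stdlib Require Import Reals Relations Lra Lia ZArith.
From Stdlib Require Import FunctionalExtensionality PropExtensionality ProofIrrelevance ClassicalEpsilon Classical.
Set Implicit Arguments.
Unset Strict Implicit.
Open Scope R_scope.


Section Q.
Variables (X : Type) (E : X -> X -> Prop).
Hypothesis Erefl : forall x, E x x.
Hypothesis Esym : forall x y, E x y -> E y x.
Hypothesis Etrans : forall x y z, E x y -> E y z -> E x z.

Lemma cls_eq x y : E x y -> cls E x = cls E y.
Proof.
move=> Hxy; apply: eq_sig_hprop.
  by move=> S p q; apply: proof_irrelevance.
simpl; apply: functional_extensionality => z; apply: propositional_extensionality.
split=> H; [apply: Etrans (Esym Hxy) H | apply: Etrans Hxy H].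
Qed.

Lemma cls_inv x y : cls E x = cls E y -> E x y.
Proof.
move=> H; have := f_equal (fun q => proj1_sig q y) H; simpl => ->; exact: Erefl.
Qed.

Lemma quot_surj (q : quot E) : exists x, q = cls E x.
Proof.
case: q => S [x Hx]; exists x; apply: eq_sig_hprop.
  by move=> S' p q; apply: proof_irrelevance.
simpl; apply: functional_extensionality => z; apply: propositional_extensionality; exact: Hx.
Qed.

Definition rep (q : quot E) : X := proj1_sig (constructive_indefinite_description _ (quot_surj q)).
Lemma rep_spec q : q = cls E (rep q).
Proof. rewrite /rep; case: constructive_indefinite_description => //. Qed.
End Q.


Lemma sgnb_abs b r : Rabs (sgnb b r) = Rabs r.
Proof. case: b => //=; exact: Rabs_Ropp. Qed.
Lemma sgnb_sub b x y : sgnb b x - sgnb b y = sgnb b (x - y).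
Proof. case: b => /=; lra. Qed.
Lemma sgnb_invol b x : sgnb b (sgnb b x) = x.
Proof. case: b => /=; lra. Qed.
Lemma sgnb_xor a b x : sgnb a (sgnb b x) = sgnb (xorb b a) x.
Proof. case: a; case: b => /=; lra. Qed.
Lemma sgnb_bound b x : -(1/4) <= x <= 1/4 -> -(1/4) <= sgnb b x <= 1/4.
Proof. case: b => /=; lra. Qed.

Section G.
Variables (n : nat) (A : bmatrix n).

Lemma Gamma_comp g h : GammaA A g -> GammaA A h -> GammaA A (fun x => g (h x)).
Proof.
elim=> [|g' i _ IH|g' i _ IH] Hh //.
- exact: (Gamma_s i (IH Hh)).
- exact: (Gamma_sinv i (IH Hh)).
Qed.

Lemma GsA i : GammaA A (sA A i).
Proof. exact: (Gamma_s i (Gamma_id A)). Qed.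
Lemma GsAi i : GammaA A (sA_inv A i).
Proof. exact: (Gamma_sinv i (Gamma_id A)). Qed.

Lemma sA_K i x : sA_inv A i (sA A i x) = x.
Proof.
apply: functional_extensionality => k; rewrite /sA_inv /sA.
case: (k == i) => /=; [lra | exact: sgnb_invol].
Qed.
Lemma sAi_K i x : sA A i (sA_inv A i x) = x.
Proof.
apply: functional_extensionality => k; rewrite /sA_inv /sA.
case: (k == i) => /=; [lra | exact: sgnb_invol].
Qed.

Lemma Gamma_inv g : GammaA A g -> exists h, GammaA A h /\ forall x, h (g x) = x.
Proof.
elim=> [|g' i _ [h [Hh HK]]|g' i _ [h [Hh HK]]].
- by exists (fun x => x); split => //; exact: Gamma_id.
- exists (fun x => h (sA_inv A i x)); split; first exact: Gamma_comp Hh (GsAi i).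
  by move=> x; rewrite sA_K HK.
- exists (fun x => h (sA A i x)); split; first exact: Gamma_comp Hh (GsA i).
  by move=> x; rewrite sAi_K HK.
Qed.

Lemma orb_refl x : orbit_rel A x x.
Proof. by exists (fun x => x); split => //; exact: Gamma_id. Qed.
Lemma orb_sym x y : orbit_rel A x y -> orbit_rel A y x.
Proof.
case=> g [Hg ->]; have [h [Hh HK]] := Gamma_inv Hg.
by exists h; split => //; rewrite HK.
Qed.
Lemma orb_trans x y z : orbit_rel A x y -> orbit_rel A y z -> orbit_rel A x z.
Proof.
case=> g [Hg ->] [h [Hh ->]]; exists (fun x => h (g x)); split => //.
exact: Gamma_comp.
Qed.

Lemma orb_g g x : GammaA A g -> orbit_rel A x (g x).
Proof. by move=> Hg; exists g. Qed.

End G.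


Section Aff.
Variables (n : nat) (A : bmatrix n).
Hypothesis A0 : forall i, A i i = false.

Definition aff (e : 'I_n -> bool) (t : 'I_n -> Z) (x : Rn n) : Rn n :=
  fun k => sgnb (e k) (x k) + IZR (t k) / 2.

Definition par (t : 'I_n -> Z) (k : 'I_n) : bool :=
  odd (\sum_(i < n) nat_of_bool (A i k && Z.odd (t i)))%N.

Definition Inv e t := forall k, e k = par t k.

Lemma par_flip t t' j k : (forall i, i != j -> Z.odd (t' i) = Z.odd (t i)) ->
  Z.odd (t' j) = ~~ Z.odd (t j) -> par t' k = xorb (par t k) (A j k).
Proof.
move=> Ht Hj; rewrite /par (bigD1 j) //= [X in _ = xorb (odd X) _](bigD1 j) //=.
rewrite (eq_bigr (fun i => nat_of_bool (A i k && Z.odd (t i)))); last first.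
  by move=> i Hi; rewrite Ht.
rewrite !oddD Hj; case: (A j k); case: (Z.odd (t j)) => /=;
  case: (odd _) => //.
Qed.

Lemma aff_id x : aff (fun _ => false) (fun _ => 0%Z) x = x.
Proof. apply: functional_extensionality => k; rewrite /aff /=; lra. Qed.

Lemma Inv_id : Inv (fun _ => false) (fun _ => 0%Z).
Proof.
move=> k; rewrite /par big1 //= => i _; by rewrite andbF.
Qed.

Definition gen k (u : Z) (x : Rn n) : Rn n :=
  fun m => if m == k then x m + IZR u / 2 else sgnb (A k m) (x m).

Definition e_r (e : 'I_n -> bool) (k : 'I_n) := fun m => xorb (e m) (A k m).
Definition t_r (e : 'I_n -> bool) (t : 'I_n -> Z) (k : 'I_n) (u : Z) := fun m => if m == k then (t k + (if e k then - u else u))%Z else t m.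

Lemma aff_gen e t k u x : aff e t (gen k u x) = aff (e_r e k) (t_r e t k u) x.
Proof.
apply: functional_extensionality => m; rewrite /aff /gen /e_r /t_r.
case: eqP => [->|_]; last by rewrite sgnb_xor Bool.xorb_comm.
rewrite A0 Bool.xorb_false_r plus_IZR; case: (e k) => /=; rewrite ?opp_IZR; lra.
Qed.

Lemma Inv_gen e t k u : Inv e t -> Z.odd u -> Inv (e_r e k) (t_r e t k u).
Proof.
move=> He Hu m; rewrite /e_r He; symmetry; apply: par_flip.
  by move=> i /negbTE Hi; rewrite /t_r Hi.
rewrite /t_r eqxx Z.odd_add; case: (e k); rewrite ?Z.odd_opp Hu; by case: Z.odd.
Qed.

Lemma Gamma_aff g : GammaA A g -> exists e t, Inv e t /\ forall x, g x = aff e t x.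
Proof.
elim=> [|g' i _ [e [t [He Hg]]]|g' i _ [e [t [He Hg]]]].
- exists (fun _ => false), (fun _ => 0%Z); split; [exact: Inv_id| by move=> x; rewrite aff_id].
- exists (e_r e i), (fun m => if m == i then (t i + 1)%Z else if A i m then (- t m)%Z else t m).
  split.
  + move=> m; rewrite /e_r He; symmetry; apply: par_flip.
      by move=> j /negbTE Hj; rewrite Hj; case: (A i j); rewrite ?Z.odd_opp.
    by rewrite eqxx Z.odd_add; case: Z.odd.
  + move=> x; apply: functional_extensionality => m; rewrite Hg /sA /aff /e_r.
    case: eqP => [->|_]; first by rewrite A0 Bool.xorb_false_r plus_IZR; lra.
    case: (A i m); case: (e m) => /=; rewrite ?opp_IZR; lra.
- exists (e_r e i), (fun m => if m == i then (t i - 1)%Z else if A i m then (- t m)%Z else t m).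
  split.
  + move=> m; rewrite /e_r He; symmetry; apply: par_flip.
      by move=> j /negbTE Hj; rewrite Hj; case: (A i j); rewrite ?Z.odd_opp.
    by rewrite eqxx Z.odd_sub; case: Z.odd.
  + move=> x; apply: functional_extensionality => m; rewrite Hg /sA_inv /aff /e_r.
    case: eqP => [->|_]; first by rewrite A0 Bool.xorb_false_r minus_IZR; lra.
    case: (A i m); case: (e m) => /=; rewrite ?opp_IZR; lra.
Qed.

Lemma aff_dist e t x y k : Rabs (aff e t y k - aff e t x k) = Rabs (y k - x k).
Proof.
rewrite /aff; replace (sgnb (e k) (y k) + IZR (t k) / 2 - (sgnb (e k) (x k) + IZR (t k) / 2))
  with (sgnb (e k) (y k) - sgnb (e k) (x k)) by lra.
by rewrite sgnb_sub sgnb_abs.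
Qed.

End Aff.


Section Inj.
Variables (n : nat) (A : bmatrix n).
Hypothesis A0 : forall i, A i i = false.

Lemma tbound e t (c d : Rn n) : in_cube c -> in_cube d -> d = aff e t c ->
  forall k, (-1 <= t k <= 1)%Z.
Proof.
move=> Hc Hd Hdc k; have := Hd k; rewrite Hdc /aff => Hk.
have := sgnb_bound (e k) (Hc k) => Hs.
have H1 : IZR (-1) <= IZR (t k) by lra.
have H2 : IZR (t k) <= IZR 1 by lra.
by split; apply: le_IZR.
Qed.

Lemma tnz e t (c d : Rn n) : in_cube c -> in_cube d -> d = aff e t c ->
  forall k, t k <> 0%Z -> c k = 1/4 \/ c k = -(1/4).
Proof.
move=> Hc Hd Hdc k Hk; have := tbound Hc Hd Hdc k => Hb.
have := Hd k; have := Hc k; rewrite Hdc /aff.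
have [->|->] : (t k = 1 \/ t k = -1)%Z by lia.
  case: (e k) => /=; lra.
case: (e k) => /=; lra.
Qed.

Lemma tau_cube k (c : Rn n) : in_cube c -> in_cube (tauA A k c).
Proof.
move=> Hc m; rewrite /tauA; case: (m == k); last exact: sgnb_bound.
have := Hc m; lra.
Qed.

Definition mu (t : 'I_n -> Z) : nat := (\sum_(k < n) Z.abs_nat (t k))%N.

Lemma cube_eq (c d : cube n) : proj1_sig c = proj1_sig d -> c = d.
Proof. move=> H; apply: eq_sig_hprop => // x p q; exact: proof_irrelevance. Qed.

Lemma mu_lt (t t' : 'I_n -> Z) k : t k <> 0%Z -> t' k = 0%Z ->
  (forall m, m != k -> t' m = t m) -> leq (mu t').+1 (mu t).
Proof.
move=> Hk Hk' Ht.
have E1 : mu t = addn (Z.abs_nat (t k)) (\sum_(i < n | i != k) Z.abs_nat (t i)).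
  by rewrite /mu (bigD1 k).
have E2 : mu t' = (\sum_(i < n | i != k) Z.abs_nat (t i)).
  rewrite /mu (bigD1 k) // Hk' /= add0n.
  by apply: eq_bigr => i Hi; rewrite Ht.
rewrite E1 E2; apply/leP; rewrite -plusE; lia.
Qed.

Lemma inj_aux N : forall e t (c d : cube n), Inv A e t -> mu t = N ->
  proj1_sig d = aff e t (proj1_sig c) -> seal_rel A c d.
Proof.
elim/ltn_ind: N => N IH e t c d He HN Hdc.
case: (classic (exists k, t k <> 0%Z)) => [[k Hk]|Hno].
- have Hc := proj2_sig c; have Hd := proj2_sig d.
  have Hck := tnz Hc Hd Hdc Hk.
  have Htk := tbound Hc Hd Hdc k.
  pose c' := exist (@in_cube n) (tauA A k (proj1_sig c)) (tau_cube k Hc).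
  have [u [Hu [Hu1 Hgen]]] : exists u, Z.odd u /\ (u = 1 \/ u = -1)%Z /\
      proj1_sig c = gen A k u (proj1_sig c').
    case: Hck => Hck.
    + exists 1%Z; split => //; split; first by left.
      apply: functional_extensionality => m.
      rewrite /gen /= /tauA; case: eqP => [->|_]; last by rewrite sgnb_invol.
      rewrite ?eqxx Hck; lra.
    + exists (-1)%Z; split => //; split; first by right.
      apply: functional_extensionality => m.
      rewrite /gen /= /tauA; case: eqP => [->|_]; last by rewrite sgnb_invol.
      rewrite ?eqxx Hck; lra.
  rewrite Hgen aff_gen // in Hdc.
  have He' := Inv_gen k He Hu.
  have Hb := tbound (proj2_sig c') Hd Hdc k.
  have Hk0 : t_r e t k u k = 0%Z.
    move: Hb; rewrite /t_r eqxx; case: (e k); lia.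
  have Hlt : leq (mu (t_r e t k u)).+1 N.
    rewrite -HN; apply: (mu_lt Hk Hk0) => m /negbTE Hm; by rewrite /t_r Hm.
  have Hr := IH _ Hlt _ _ c' d He' (erefl _) Hdc.
  apply: rst_trans Hr; apply: rst_step; exists k; split => //.
- have Ht0 : forall k, t k = 0%Z.
    by move=> k; apply: NNPP => H; apply: Hno; exists k.
  have -> : d = c.
    apply: cube_eq; rewrite Hdc; apply: functional_extensionality => k.
    rewrite /aff He Ht0 /par big1 /=; first lra.
    by move=> i _; rewrite Ht0 andbF.
  exact: rst_refl.
Qed.
End Inj.


Lemma Rabs_le_iv x a : Rabs x <= a -> -a <= x <= a.
Proof. unfold Rabs; destruct (Rcase_abs x); intros; lra. Qed.

Section S.
Variables (n : nat) (A : bmatrix n).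
Hypothesis A0 : forall i, A i i = false.

Lemma inj (c d : cube n) : orbit_rel A (proj1_sig c) (proj1_sig d) -> seal_rel A c d.
Proof.
case=> g [Hg Hd]; have [e [t [He Hgt]]] := Gamma_aff A0 Hg.
by apply: (inj_aux A0 He (erefl _)); rewrite Hd Hgt.
Qed.

Lemma tau_sA i (c : Rn n) : c i = 1/4 -> tauA A i c = sA_inv A i c.
Proof.
move=> H; apply: functional_extensionality => k; rewrite /tauA /sA_inv.
case: eqP => [->|//]; rewrite H; lra.
Qed.
Lemma tau_sAi i (c : Rn n) : c i = -(1/4) -> tauA A i c = sA A i c.
Proof.
move=> H; apply: functional_extensionality => k; rewrite /tauA /sA.
case: eqP => [->|//]; rewrite H; lra.
Qed.

Lemma gen_orbit (c d : cube n) : seal_gen A c d -> orbit_rel A (proj1_sig c) (proj1_sig d).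
Proof.
case=> i [[H|H] ->].
- rewrite tau_sA //; apply: orb_g; exact: GsAi.
- rewrite tau_sAi //; apply: orb_g; exact: GsA.
Qed.

Lemma seal_orbit (c d : cube n) : seal_rel A c d -> orbit_rel A (proj1_sig c) (proj1_sig d).
Proof.
elim=> [x y H|x|x y _ IH|x y z _ IH1 _ IH2].
- exact: gen_orbit.
- exact: orb_refl.
- exact: orb_sym.
- exact: orb_trans IH1 IH2.
Qed.

Lemma shift_p (m : nat) x i : exists g, GammaA A g /\ g x i = x i + INR m / 2 /\
  forall k, k != i -> Rabs (g x k) = Rabs (x k).
Proof.
elim: m => [|m [g [Hg [Hi Hk]]]].
- exists (fun x => x); split; first exact: Gamma_id.
  split => //=; lra.
- exists (fun y => sA A i (g y)); split; first exact: Gamma_s.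
  split.
  + rewrite /sA eqxx Hi S_INR; lra.
  + move=> k Hki; rewrite /sA (negbTE Hki) sgnb_abs; exact: Hk.
Qed.

Lemma shift_m (m : nat) x i : exists g, GammaA A g /\ g x i = x i - INR m / 2 /\
  forall k, k != i -> Rabs (g x k) = Rabs (x k).
Proof.
elim: m => [|m [g [Hg [Hi Hk]]]].
- exists (fun x => x); split; first exact: Gamma_id.
  split => //=; lra.
- exists (fun y => sA_inv A i (g y)); split; first exact: Gamma_sinv.
  split.
  + rewrite /sA_inv eqxx Hi S_INR; lra.
  + move=> k Hki; rewrite /sA_inv (negbTE Hki) sgnb_abs; exact: Hk.
Qed.

Lemma fix_i x i : exists g, GammaA A g /\ Rabs (g x i) <= 1/4 /\
  forall k, k != i -> Rabs (g x k) = Rabs (x k).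
Proof.
pose q := up (2 * x i - 1/2).
have [H1 H2] := archimed (2 * x i - 1/2).
case: (Z_le_gt_dec 0 q) => Hq.
- have [g [Hg [Hi Hk]]] := shift_m (Z.to_nat q) x i.
  exists g; split => //; split => //.
  rewrite Hi INR_IZR_INZ Z2Nat.id //; apply: Rabs_le; fold q in H1, H2; lra.
- have [g [Hg [Hi Hk]]] := shift_p (Z.to_nat (- q)) x i.
  exists g; split => //; split => //.
  rewrite Hi INR_IZR_INZ Z2Nat.id; last lia.
  rewrite opp_IZR; apply: Rabs_le; fold q in H1, H2; lra.
Qed.

Lemma reduce_list (l : seq 'I_n) x : exists g, GammaA A g /\
  forall k, (k \in l \/ Rabs (x k) <= 1/4) -> Rabs (g x k) <= 1/4.
Proof.
elim: l x => [|i l IH] x.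
- exists (fun y => y); split; first exact: Gamma_id.
  by move=> k [H|H].
- have [h [Hh [Hi Hk]]] := fix_i x i.
  have [g [Hg Hgk]] := IH (h x).
  exists (fun y => g (h y)); split; first exact: Gamma_comp.
  move=> k H; apply: Hgk.
  case: (eqVneq k i) => [->|Hki]; first by right.
  case: H => [H|H].
  + by left; move: H; rewrite in_cons (negbTE Hki).
  + by right; rewrite Hk.
Qed.

Lemma reduce x : exists c : cube n, orbit_rel A x (proj1_sig c).
Proof.
have [g [Hg Hgk]] := reduce_list (enum 'I_n) x.
have Hc : in_cube (g x).
  move=> k; apply: Rabs_le_iv; apply: Hgk; left; exact: mem_enum.
exists (exist (@in_cube n) (g x) Hc); exact: orb_g.
Qed.

End S.


Section L.
Variables (n : nat) (A : bmatrix n).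
Variable P : cube n -> Prop.
Hypothesis HPinv : forall c d, seal_gen A c d -> P c -> P d.
Hypothesis HPopen : exists U, Rn_open U /\ forall c : cube n, P c <-> U (proj1_sig c).

Definition T' (y : Rn n) := exists z : cube n, orbit_rel A y (proj1_sig z) /\ P z.

Lemma dist_sA i (x y : Rn n) k : Rabs (sA A i y k - sA A i x k) = Rabs (y k - x k).
Proof.
rewrite /sA; case: (k == i); last by rewrite sgnb_sub sgnb_abs.
by f_equal; lra.
Qed.
Lemma dist_sAi i (x y : Rn n) k : Rabs (sA_inv A i y k - sA_inv A i x k) = Rabs (y k - x k).
Proof.
rewrite /sA_inv; case: (k == i); last by rewrite sgnb_sub sgnb_abs.
by f_equal; lra.
Qed.

Lemma Rmin_lt3 a b c x : x < Rmin a (Rmin b c) -> x < a /\ x < b /\ x < c.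
Proof. move=> H; have := Rmin_l a (Rmin b c); have := Rmin_r a (Rmin b c);
  have := Rmin_l b c; have := Rmin_r b c; lra. Qed.

Lemma Lstep (l : seq 'I_n) : forall c : cube n, P c -> exists eps, 0 < eps /\
  forall y : Rn n, (forall k, Rabs (y k - proj1_sig c k) < eps) ->
  (forall k, k \notin l -> Rabs (y k) <= 1/4) -> T' y.
Proof.
elim: l => [|i l IH] c Pc.
- have [U [HU HPU]] := HPopen.
  have [eps [Heps Hball]] := HU _ ((proj1 (HPU c)) Pc).
  exists eps; split => // y Hy Hyin.
  have Hcy : in_cube y by move=> k; apply: Rabs_le_iv; exact: Hyin.
  exists (exist (@in_cube n) y Hcy); split; first exact: orb_refl.
  apply/HPU; exact: Hball.
- have [eps1 [He1 H1]] := IH c Pc.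
  have Hc := proj2_sig c.
  have Hyin' : forall (y : Rn n), Rabs (y i) <= 1/4 -> (forall k, k \notin i :: l -> Rabs (y k) <= 1/4) ->
      forall k, k \notin l -> Rabs (y k) <= 1/4.
    move=> y Hi Hyin k Hk; case: (eqVneq k i) => [->//|Hki].
    by apply: Hyin; rewrite in_cons negb_or Hki.
  case: (Req_dec (proj1_sig c i) (1/4)) => Hci1; [|case: (Req_dec (proj1_sig c i) (-(1/4))) => Hci2].
  + pose c' := exist (@in_cube n) (tauA A i (proj1_sig c)) (tau_cube A i Hc).
    have Pc' : P c' by apply: HPinv Pc; exists i; split => //; left.
    have [eps2 [He2 H2]] := IH c' Pc'.
    exists (Rmin eps1 (Rmin eps2 (1/4))); split.
      repeat apply: Rmin_glb_lt; lra.
    move=> y Hy Hyin.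
    have Hyk : forall k, Rabs (y k - proj1_sig c k) < eps1 /\ Rabs (y k - proj1_sig c k) < eps2
      /\ Rabs (y k - proj1_sig c k) < 1/4 by move=> k; apply: Rmin_lt3; exact: Hy.
    case: (Rle_dec (Rabs (y i)) (1/4)) => Hyi.
      apply: H1 => //; [move=> k; exact: (proj1 (Hyk k))| exact: Hyin'].
    have [_ [_ H3]] := Hyk i; rewrite Hci1 in H3.
    have [Ha Hb] := Rabs_def2 _ _ H3.
    have Hyi' : 1/4 < y i.
      apply Rnot_le_lt in Hyi; rewrite Rabs_pos_eq in Hyi; lra.
    have [z [Hz Pz]] : T' (sA_inv A i y).
      apply: H2.
      * move=> k; rewrite /c' /= tau_sA // dist_sAi; exact: (proj1 (proj2 (Hyk k))).
      * move=> k Hk; case: (eqVneq k i) => [->|Hki].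
          rewrite /sA_inv eqxx; apply: Rabs_le; lra.
        rewrite /sA_inv (negbTE Hki) sgnb_abs; apply: Hyin; by rewrite in_cons negb_or Hki.
    exists z; split => //; apply: orb_trans Hz; apply: orb_g; exact: GsAi.
  + pose c' := exist (@in_cube n) (tauA A i (proj1_sig c)) (tau_cube A i Hc).
    have Pc' : P c' by apply: HPinv Pc; exists i; split => //; right.
    have [eps2 [He2 H2]] := IH c' Pc'.
    exists (Rmin eps1 (Rmin eps2 (1/4))); split.
      repeat apply: Rmin_glb_lt; lra.
    move=> y Hy Hyin.
    have Hyk : forall k, Rabs (y k - proj1_sig c k) < eps1 /\ Rabs (y k - proj1_sig c k) < eps2
      /\ Rabs (y k - proj1_sig c k) < 1/4 by move=> k; apply: Rmin_lt3; exact: Hy.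
    case: (Rle_dec (Rabs (y i)) (1/4)) => Hyi.
      apply: H1 => //; [move=> k; exact: (proj1 (Hyk k))| exact: Hyin'].
    have [_ [_ H3]] := Hyk i; rewrite Hci2 in H3.
    have [Ha Hb] := Rabs_def2 _ _ H3.
    have Hyi' : y i < -(1/4).
      apply Rnot_le_lt in Hyi; rewrite Rabs_left in Hyi; lra.
    have [z [Hz Pz]] : T' (sA A i y).
      apply: H2.
      * move=> k; rewrite /c' /= tau_sAi // dist_sA; exact: (proj1 (proj2 (Hyk k))).
      * move=> k Hk; case: (eqVneq k i) => [->|Hki].
          rewrite /sA eqxx; apply: Rabs_le; lra.
        rewrite /sA (negbTE Hki) sgnb_abs; apply: Hyin; by rewrite in_cons negb_or Hki.
    exists z; split => //; apply: orb_trans Hz; apply: orb_g; exact: GsA.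
  + have Hci := Hc i.
    exists (Rmin eps1 (Rmin (1/4 - proj1_sig c i) (proj1_sig c i + 1/4))); split.
      repeat apply: Rmin_glb_lt; lra.
    move=> y Hy Hyin.
    have Hyk : forall k, Rabs (y k - proj1_sig c k) < eps1 /\ Rabs (y k - proj1_sig c k) < (1/4 - proj1_sig c i)
      /\ Rabs (y k - proj1_sig c k) < (proj1_sig c i + 1/4) by move=> k; apply: Rmin_lt3; exact: Hy.
    apply: H1; first by move=> k; exact: (proj1 (Hyk k)).
    apply: Hyin' => //.
    have [_ [H3 H4]] := Hyk i.
    have [Ha Hb] := Rabs_def2 _ _ H3; have [Hc1 Hd1] := Rabs_def2 _ _ H4.
    apply: Rabs_le; lra.
Qed.

End L.


Theorem mainTheorem10 (n : nat) (A : bmatrix n) (hA : is_Bott A) :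
  homeomorphic (@seal_open n A) (@MA_open n A).
Proof.
have A0 : forall i, A i i = false.
  case: hA => s Hs i; apply/negP => H; have := Hs i i H; by rewrite ltnn.
have Sr : forall x, seal_rel A x x by move=> x; exact: rst_refl.
have Ss : forall x y, seal_rel A x y -> seal_rel A y x by move=> x y; exact: rst_sym.
have St : forall x y z, seal_rel A x y -> seal_rel A y z -> seal_rel A x z
  by move=> x y z; exact: rst_trans.
have Or : forall x, orbit_rel A x x := @orb_refl n A.
have Os : forall x y, orbit_rel A x y -> orbit_rel A y x := @orb_sym n A.
have Ot : forall x y z, orbit_rel A x y -> orbit_rel A y z -> orbit_rel A x z := @orb_trans n A.
pose red x := proj1_sig (constructive_indefinite_description _ (reduce A x)).
have Hred : forall x, orbit_rel A x (proj1_sig (red x)).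
  by move=> x; rewrite /red; case: constructive_indefinite_description.
pose fQ (q : seal_space A) : MA A := cls (orbit_rel A) (proj1_sig (rep q)).
pose gM (m : MA A) : seal_space A := cls (seal_rel A) (red (rep m)).
have F1 : forall c, fQ (cls (seal_rel A) c) = cls (orbit_rel A) (proj1_sig c).
  move=> c; rewrite /fQ; apply: cls_eq => //; apply: Os; apply: seal_orbit.
  by apply: (cls_inv Sr); apply: rep_spec.
have G1 : forall x (c : cube n), orbit_rel A x (proj1_sig c) -> gM (cls (orbit_rel A) x) = cls (seal_rel A) c.
  move=> x c Hc; rewrite /gM; apply: cls_eq => //; apply: (inj A0).
  have Hr : orbit_rel A x (rep (cls (orbit_rel A) x)) by apply: (cls_inv Or); apply: rep_spec.
  exact: (Ot _ _ _ (Os _ _ (Hred _)) (Ot _ _ _ (Os _ _ Hr) Hc)).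
exists fQ, gM; split; [|split; [|split]].
- move=> q; have [c ->] := quot_surj q; rewrite F1; exact: G1.
- move=> m; have [x ->] := quot_surj m; have [c Hc] := reduce A x.
  rewrite (G1 _ _ Hc) F1; apply: cls_eq => //; exact: Os.
- move=> V HV; exists (fun x => V (cls (orbit_rel A) x)); split => // c.
  by rewrite F1.
- move=> W HW x Hx.
  have [c Hc] := reduce A x.
  rewrite /= (G1 _ _ Hc) in Hx.
  have HPinv : forall c d : cube n, seal_gen A c d -> W (cls (seal_rel A) c) -> W (cls (seal_rel A) d).
    by move=> c1 d1 Hcd; rewrite (cls_eq Ss St (rst_step _ _ _ _ Hcd)).
  have [eps [He H]] := Lstep (P := fun c => W (cls (seal_rel A) c)) HPinv HW (enum 'I_n) Hx.
  case: Hc => g [Hg Hgx]; have [e [t [_ Het]]] := Gamma_aff A0 Hg.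
  exists eps; split => // y Hy.
  have [z [Hz Pz]] : T' A (fun c => W (cls (seal_rel A) c)) (g y).
    apply: H; last by move=> k; rewrite mem_enum.
    by move=> k; rewrite Hgx !Het aff_dist.
  rewrite /= (G1 _ z) //; apply: Ot Hz; exact: orb_g.
Qed.
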